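(* Let $N_3(t)=\mathbb{E}[Z_3(t)]$ be the expected number of vertices of degree $3$ in a Random Apollonian Network after $t$ steps. Then for all $t\ge 1$, $$\Big|N_3(t) - \frac{2}{5} t\Big|\leq K, \quad\text{where } K=3.6.$$
   Context: A Random Apollonian Network (RAN) is generated as follows: start (at time $t=0$) with a single triangular face. At each step $t=1,2,\dots$, pick one of the current (bounded) triangular faces uniformly at random, insert a new vertex inside it, and connect it to the three vertices on the boundary of that face, subdividing the face into three new triangular faces. After $t$ steps there are $2t+1$ triangular faces. $Z_k(t)$ denotes the number of vertices of degree exactly $k$ after $t$ steps. *)

(* Defs.v *)
(* Random Apollonian Network as a deterministic function of
   the sequence of face choices; expectation = average over uniform choices. *)
From mathcomp Require Import all_boot all_order all_algebra.
Set Implicit Arguments. Unset Strict Implicit. Unset Printing Implicit Defensive.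
Import Order.TTheory GRing.Theory Num.Theory.

(* A planar triangulation state: number of vertices (labelled 0..nv-1),
   list of (undirected) edges, list of bounded triangular faces. *)
Record ran_state := RanState {
  nverts : nat;
  edges : seq (nat * nat);
  faces : seq (nat * nat * nat)
}.

Definition ran_init : ran_state :=
  RanState 3 [:: (0, 1); (1, 2); (0, 2)] [:: (0, 1, 2)].

Definition ran_step (s : ran_state) (i : nat) : ran_state :=
  let: (a, b, c) := nth (0, 0, 0) (faces s) i in
  let v := nverts s in
  RanState v.+1
    ([:: (a, v); (b, v); (c, v)] ++ edges s)
    (set_nth (0, 0, 0) (faces s) i (a, b, v) ++ [:: (b, c, v); (a, c, v)]).

Definition degree (s : ran_state) (x : nat) : nat :=
  count (fun e : nat * nat => (e.1 == x) || (e.2 == x)) (edges s).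

Definition Zk (k : nat) (s : ran_state) : nat :=
  count (fun x => degree s x == k) (iota 0 (nverts s)).

Fixpoint expZk (k t : nat) (s : ran_state) : rat :=
  match t with
  | 0 => (Zk k s)%:R
  | t'.+1 => ((\sum_(i < size (faces s)) expZk k t' (ran_step s i))
              / (size (faces s))%:R)%R
  end.

Definition N (k t : nat) : rat := expZk k t ran_init.

(* Main.v *)
Require Import Defs.
From mathcomp Require Import all_boot all_order all_algebra.
From mathcomp Require Import zify ring lra.
Import Order.TTheory GRing.Theory Num.Theory.

Definition cnt (x : nat) (f : nat * nat * nat) : nat :=
  ((f.1.1 == x) + (f.1.2 == x) + (f.2 == x))%N.

Definition fcount (s : ran_state) (x : nat) : nat :=
  \sum_(f <- faces s) cnt x f.

Definition face_ok (nv : nat) (f : nat * nat * nat) : bool :=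
  [&& f.1.1 != f.1.2, f.1.2 != f.2, f.1.1 != f.2,
      f.1.1 < nv, f.1.2 < nv & f.2 < nv].

Definition Inv (s : ran_state) : Prop :=
  [/\ 3 <= nverts s, all (face_ok (nverts s)) (faces s),
      all (fun e : nat * nat => (e.1 < nverts s) && (e.2 < nverts s)) (edges s)
    & forall x, 3 <= x < nverts s -> degree s x = fcount s x /\ 3 <= degree s x].

Definition P (n : nat) (s : ran_state) := Inv s /\ size (faces s) = n.

Lemma P_init : P 1 ran_init.
Proof.
split=> //; split=> // x; rewrite /=; lia.
Qed.

Lemma count_sumb (T : Type) (a : pred T) (r : seq T) :
  \sum_(x <- r) (a x : nat) = count a r.
Proof. elim: r => [|y r IH]; by rewrite ?big_nil ?big_cons ?IH. Qed.

Lemma cnt_le1 nv f x : face_ok nv f -> cnt x f <= 1.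
Proof.
case: f => [[a b] c]; rewrite /face_ok /cnt /=.
case/and4P => Hab Hbc Hac _; lia.
Qed.

Lemma face_ok_mono nv f : face_ok nv f -> face_ok nv.+1 f.
Proof.
case: f => [[a b] c]; rewrite /face_ok /=.
case/and4P => -> -> -> /and3P [? ? ?] /=. apply/and3P; split; lia.
Qed.

Lemma fcount_old s x : all (face_ok (nverts s)) (faces s) -> nverts s <= x ->
  fcount s x = 0.
Proof.
rewrite /fcount => /allP H Hx; rewrite big_seq big1 // => f /H.
case: f => [[a b] c]; rewrite /face_ok /cnt /= => /and4P [_ _ _ /and3P [? ? ?]].
have -> : (a == x) = false by apply/eqP; lia.
have -> : (b == x) = false by apply/eqP; lia.
have -> : (c == x) = false by apply/eqP; lia.
done.
Qed.

Lemma degree_old s x :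
  all (fun e : nat * nat => (e.1 < nverts s) && (e.2 < nverts s)) (edges s) ->
  nverts s <= x -> degree s x = 0.
Proof.
rewrite /degree => /allP H Hx; apply/eqP; rewrite -leqn0 leqNgt -has_count.
apply/hasP => -[e /H /andP [H1 H2] /orP [] /eqP E]; lia.
Qed.

Section Step.
Variables (s : ran_state) (i : nat) (a b c : nat).
Hypothesis Hi : i < size (faces s).
Hypothesis Hf : nth (0, 0, 0) (faces s) i = (a, b, c).
Hypothesis Hok : face_ok (nverts s) (a, b, c).

Lemma nverts_step : nverts (ran_step s i) = (nverts s).+1.
Proof. by rewrite /ran_step Hf. Qed.

Lemma size_step : size (faces (ran_step s i)) = (size (faces s)).+2.
Proof.
rewrite /ran_step Hf /= size_cat size_set_nth /=.
rewrite (maxn_idPr Hi); lia.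
Qed.

Lemma faces_split :
  faces s = take i (faces s) ++ (a, b, c) :: drop i.+1 (faces s).
Proof. by rewrite -Hf -drop_nth // cat_take_drop. Qed.

Lemma faces_step : faces (ran_step s i) =
  take i (faces s) ++ (a, b, nverts s) :: drop i.+1 (faces s)
  ++ [:: (b, c, nverts s); (a, c, nverts s)].
Proof. by rewrite /ran_step Hf /= set_nthE Hi -catA. Qed.

Lemma degree_step x : degree (ran_step s i) x =
  ((a == x) + (b == x) + (c == x) + 3 * (nverts s == x) + degree s x)%N.
Proof.
rewrite /degree /ran_step Hf /=.
move: Hok; rewrite /face_ok /=; lia.
Qed.

Lemma fcount_step x : fcount (ran_step s i) x =
  ((a == x) + (b == x) + (c == x) + 3 * (nverts s == x) + fcount s x)%N.
Proof.
rewrite /fcount [in RHS]faces_split faces_step !big_cat !big_cons /= big_cat !big_cons big_nil /cnt /=.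
move: Hok; rewrite /face_ok /=; lia.
Qed.

End Step.

Lemma face_of (s : ran_state) (i : nat) : Inv s -> i < size (faces s) ->
  exists a b c, nth (0, 0, 0) (faces s) i = (a, b, c) /\
    face_ok (nverts s) (a, b, c).
Proof.
case=> _ /allP Hf _ _ Hi.
case E: (nth (0, 0, 0) (faces s) i) => [[a b] c].
exists a, b, c; split=> //; rewrite -E; apply: Hf; exact: mem_nth.
Qed.

Lemma P_step n s i : P n s -> i < n -> P n.+2 (ran_step s i).
Proof.
move=> [HI Hn] Hi; rewrite -Hn in Hi.
have [a [b [c [Hf Hok]]]] := @face_of s i HI Hi.
have HI' := HI; case: HI' => H3 /allP HF /allP HE H4.
have Ns := @nverts_step s i a b c Hf.
split; last by rewrite (@size_step s i a b c Hi Hf Hok); congr (_.+2).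
split; rewrite ?Ns //.
- lia.
- rewrite (@faces_step s i a b c Hi Hf) all_cat /= all_cat /=.
  move: Hok; rewrite /face_ok /= => /and4P [? ? ? /and3P [? ? ?]].
  apply/and5P; split.
  + apply/allP => f /mem_take /HF; exact: face_ok_mono.
  + rewrite /face_ok /=; lia.
  + apply/allP => f /mem_drop /HF; exact: face_ok_mono.
  + rewrite /face_ok /=; lia.
  + rewrite /face_ok /=; lia.
- rewrite /ran_step Hf /=.
  move: Hok; rewrite /face_ok /= => /and4P [? ? ? /and3P [? ? ?]].
  apply/and4P; split; try (apply/andP; split; lia).
  apply/allP => e /HE /andP [? ?]; apply/andP; split; lia.
- move=> x Hx; rewrite (@degree_step s i a b c Hi Hf Hok) (@fcount_step s i a b c Hi Hf Hok).
  case: (ltnP x (nverts s)) => Hxv.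
  + have /H4 [-> ?] : 3 <= x < nverts s by lia.
    split=> //; lia.
  + have Ex : x = nverts s by lia.
    subst x.
    have -> : degree s (nverts s) = 0 by apply: degree_old => //; apply/allP.
    have -> : fcount s (nverts s) = 0 by apply: fcount_old => //; apply/allP.
    move: Hok; rewrite /face_ok /= eqxx; lia.
Qed.

Definition Iint (s : ran_state) : nat :=
  \sum_(3 <= x < nverts s) (degree s x == 3 : nat).

Lemma Iint_step (s : ran_state) (i : nat) : Inv s -> i < size (faces s) ->
  Iint (ran_step s i) =
  (\sum_(3 <= x < nverts s)
     (cnt x (nth (0, 0, 0) (faces s) i) + degree s x == 3 : nat) + 1)%N.
Proof.
move=> HI Hi.
have [a [b [c [Hf Hok]]]] := @face_of s i HI Hi.
have HI' := HI; case: HI' => H3 /allP HF /allP HE H4.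
have H3' : (3 <= nverts s)%N by lia.
rewrite /Iint (@nverts_step s i a b c Hf) big_nat_recr //=.
rewrite Hf; congr (_ + _)%N.
- apply: eq_big_nat => x Hx.
  rewrite (@degree_step s i a b c Hi Hf Hok) /cnt /=.
  have -> : (nverts s == x) = false by apply/eqP; lia.
  by rewrite muln0 addn0.
- rewrite (@degree_step s i a b c Hi Hf Hok) eqxx.
  have -> : degree s (nverts s) = 0 by apply: degree_old => //; apply/allP.
  move: Hok; rewrite /face_ok /=.
  move=> /and4P [_ _ _ /and3P [? ? ?]].
  have -> : (a == nverts s) = false by apply/eqP; lia.
  have -> : (b == nverts s) = false by apply/eqP; lia.
  by have -> : (c == nverts s) = false by apply/eqP; lia.
Qed.

Lemma key (n : nat) (s : ran_state) : P n s ->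
  (\sum_(i < n) Iint (ran_step s i) + 3 * Iint s = n * Iint s + n)%N.
Proof.
move=> [HI Hn].
have HI' := HI; case: HI' => H3 /allP HF /allP HE H4.
rewrite (eq_bigr (fun i : 'I_n => \sum_(3 <= x < nverts s)
     (cnt x (nth (0, 0, 0) (faces s) i) + degree s x == 3 : nat) + 1)%N);
  last by move=> i _; apply: Iint_step => //; rewrite Hn.
rewrite big_split /= sum_nat_const card_ord muln1 exchange_big /=.
rewrite /Iint big_distrr /= addnAC -big_split /=; congr (_ + _)%N.
rewrite big_distrr /=; apply: eq_big_nat => x Hx.
have [Hd Hd3] := H4 x Hx.
have Hc : forall i : 'I_n, (cnt x (nth (0, 0, 0) (faces s) i) <= 1)%N.
  move=> i; apply: (@cnt_le1 (nverts s)); apply: HF; apply: mem_nth.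
  by rewrite Hn.
have Hsum : (\sum_(i < n) cnt x (nth (0, 0, 0) (faces s) i))%N = degree s x.
  by rewrite Hd /fcount (big_nth (0, 0, 0)) Hn big_mkord.
case: (ltngtP (degree s x) 3) => Hdx.
- lia.
- rewrite big1 ?muln0 //.
  move=> i _; apply/eqP; rewrite eqb0; apply/eqP; lia.
- rewrite muln1 muln1.
  have : (\sum_(i < n) ((cnt x (nth (0, 0, 0) (faces s) i) + 3 == 3 : nat)
            + cnt x (nth (0, 0, 0) (faces s) i)))%N = n.
    rewrite -[RHS]card_ord -sum1_card; apply: eq_bigr => i _.
    have := Hc i; lia.
  rewrite big_split /= Hsum Hdx; lia.
Qed.

Local Open Scope ring_scope.

Definition avg (f : ran_state -> rat) (s : ran_state) : rat :=
  (\sum_(i < size (faces s)) f (ran_step s i)) / (size (faces s))%:R.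

Fixpoint E (f : ran_state -> rat) (t : nat) (s : ran_state) : rat :=
  match t with 0 => f s | t'.+1 => avg (E f t') s end.

Lemma expZk_E k t s : expZk k t s = E (fun s => (Zk k s)%:R) t s.
Proof.
elim: t s => [//|t IH] s /=; rewrite /avg; congr (_ / _).
by apply: eq_bigr => i _; rewrite IH.
Qed.

Lemma E_tower f t s : E f t.+1 s = E (avg f) t s.
Proof.
elim: t s => [//|t IH] s /=; rewrite /avg; congr (_ / _).
by apply: eq_bigr => i _; rewrite -IH.
Qed.

Lemma E_le f g t n s : (0 < n)%N -> P n s ->
  (forall s', P (n + 2 * t) s' -> f s' <= g s') -> E f t s <= E g t s.
Proof.
elim: t n s => [|t IH] n s Hn0 HP Hfg /=.
  by apply: Hfg; rewrite muln0 addn0.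
rewrite /avg; have Hs : size (faces s) = n by case: HP.
rewrite Hs; apply: ler_wpM2r; first by rewrite invr_ge0 ler0n.
apply: ler_sum => i _; apply: (IH n.+2) => //.
  apply: P_step => //; by rewrite -Hs.
by move=> s' Hs'; apply: Hfg; rewrite (_ : (n + 2 * t.+1 = n.+2 + 2 * t)%N) //; lia.
Qed.

Lemma E_aff a b f t n s : (0 < n)%N -> P n s ->
  E (fun s => a * f s + b) t s = a * E f t s + b.
Proof.
elim: t n s => [//|t IH] n s Hn0 HP /=.
rewrite /avg; have Hs : size (faces s) = n by case: HP.
rewrite Hs (eq_bigr (fun i : 'I_n => a * E f t (ran_step s i) + b)); last first.
  move=> i _; apply: (IH n.+2) => //; apply: P_step => //; by rewrite -Hs.
rewrite big_split /= -mulr_sumr sumr_const card_ord -mulr_natr.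
have Hn : (n%:R : rat) != 0 by rewrite pnatr_eq0 -lt0n.
by field.
Qed.

Definition Ir (s : ran_state) : rat := (Iint s)%:R.

Lemma avg_Ir n s : (0 < n)%N -> P n s ->
  avg Ir s = (1 - 3 / n%:R) * Ir s + 1.
Proof.
move=> Hn0 HP; have := @key n s HP; rewrite /avg /Ir.
have -> : size (faces s) = n by case: HP.
move/(congr1 (fun m : nat => (m%:R : rat))); rewrite !natrD !natrM natr_sum.
have Hn : (n%:R : rat) != 0 by rewrite pnatr_eq0 -lt0n.
move=> H.
have -> : \sum_(i < n) ((Iint (ran_step s i))%:R : rat) =
  n%:R * (Iint s)%:R + n%:R - 3%:R * (Iint s)%:R.
  by rewrite -H; ring.
by field.
Qed.

Definition e (t : nat) : rat := E Ir t ran_init.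

Lemma e_rec t : e t.+1 = (1 - 3 / (1 + 2 * t)%N%:R) * e t + 1.
Proof.
rewrite /e E_tower.
rewrite (_ : E (avg Ir) t ran_init =
   E (fun s => (1 - 3 / (1 + 2 * t)%N%:R) * Ir s + 1) t ran_init).
  by apply: (@E_aff _ _ _ _ 1) => //; exact: P_init.
apply/eqP; rewrite eq_le; apply/andP; split;
  apply: (@E_le _ _ _ 1) => //; try exact: P_init;
  move=> s' Hs'; rewrite (@avg_Ir _ s' _ Hs') //; lia.
Qed.

Lemma e0 : e 0 = 0.
Proof. by rewrite /e /= /Ir /Iint big_geq. Qed.

Lemma e1 : e 1 = 1.
Proof. by rewrite e_rec e0 mulr0 add0r. Qed.

Lemma e_closed k : e k.+2 = (2 * (k.+2)%:R + 1) / 5.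
Proof.
elim: k => [|k IH].
  rewrite e_rec e1 /=. rewrite (_ : 3 / 3%:R = 1 :> rat); last by field.
  by rewrite subrr mul0r add0r; field.
rewrite e_rec IH.
have H1 : ((1 + 2 * k.+2)%N%:R : rat) = 2 * k%:R + 5.
  by rewrite natrD natrM -!natr1; ring.
rewrite H1 -!natr1.
have Hk : 2 * (k%:R : rat) + 5 != 0.
  have := ler0n rat k => Hk0.
  have Hp : 0 < 2 * (k%:R : rat) + 5 by lra.
  by rewrite lt0r_neq0.
field; exact: Hk.
Qed.

Lemma Zk_split s : (3 <= nverts s)%N ->
  (Iint s <= Zk 3 s <= Iint s + 3)%N.
Proof.
move=> H3.
have -> : Zk 3 s = (count (fun x => degree s x == 3) (iota 0 3) + Iint s)%N.
  rewrite /Zk -(subnKC H3) iotaD count_cat /Iint.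
  by rewrite -count_sumb /index_iota !count_sumb add0n.
have := count_size (fun x => degree s x == 3%N) (iota 0 3).
rewrite size_iota; lia.
Qed.

Theorem mainTheorem2 (t : nat) : (1 <= t)%N ->
  `| N 3 t - (2%:R / 5%:R) * t%:R | <= 36%:R / 10%:R :> rat.
Proof.
move=> Ht.
have Hlo : e t <= N 3 t.
  rewrite /N expZk_E /e; apply: (@E_le _ _ _ 1) => //; first exact: P_init.
  move=> s' [[H3 _ _ _] _]; rewrite /Ir ler_nat.
  by have /andP [] := @Zk_split s' H3.
have Hhi : N 3 t <= e t + 3.
  rewrite /N expZk_E /e -[E Ir t _]mul1r -(@E_aff _ _ _ _ 1) //; last exact: P_init.
  apply: (@E_le _ _ _ 1) => //; first exact: P_init.
  move=> s' [[H3 _ _ _] _]; rewrite /Ir mul1r.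
  rewrite -[3 in X in _ <= X]/(3%N%:R) -natrD ler_nat.
  by have /andP [] := @Zk_split s' H3.
rewrite ler_norml.
case: t Ht Hlo Hhi => [//|[|k]] _ Hlo Hhi.
  rewrite e1 in Hlo Hhi; apply/andP; split; lra.
rewrite e_closed in Hlo Hhi.
apply/andP; split; lra.
Qed.
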